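(* Let $T$ be a complete discrete valuation ring with fraction field $K$ and uniformizer $t$. Let $\widehat R_0 \supset T$ be a complete discrete valuation ring with uniformizer $t$ and fraction field $F_0$, with absolute value $|t^n u| = \alpha^{-n}$ ($\alpha>1$ fixed, $u \in \widehat R_0^\times$). Let $F_1, F_2 \subset F_0$ be subfields containing $T$ and let $V \subset F_1 \cap \widehat R_0$, $W \subset F_2 \cap \widehat R_0$ be $t$-adically complete $T$-submodules with $V + W = \widehat R_0$, $V \cap t\widehat R_0 = tV$ and $W \cap t\widehat R_0 = tW$. Let $n$ be a positive integer, let $\Omega \subset F_0^n \times F_0^n$ be an open neighborhood of $(0,0)$ and let $f: \Omega \to F_0^n$ be an analytic map such that (i) $f(0,0)=0$ and (ii) $f(x,0) = f(0,x) = x$ for all $x$ in an open neighborhood of $0$. Then there is a real number $\epsilon>0$ such that for every $a \in F_0^n$ with $|a| \le \epsilon$ there exist $v \in V^n$ and $w \in W^n$ with $(v,w) \in \Omega$ and $f(v,w) = a$.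
   Context: $t$-adically complete means $V \to \varprojlim_m V/t^{m+1}V$ is an isomorphism. On $F_0^n$ one uses the max norm. *)

(* Defs.v *)
From HB Require Import structures.
From mathcomp Require Import all_boot all_order all_algebra.
From mathcomp Require Import reals.
Set Implicit Arguments. Unset Strict Implicit. Unset Printing Implicit Defensive.
Import Order.TTheory GRing.Theory Num.Theory.
Local Open Scope ring_scope.

Section Defs.
Variables (R : realType) (F0 : fieldType).

Definition is_subring (S : F0 -> Prop) : Prop :=
  [/\ S 0, S 1, (forall x y, S x -> S y -> S (x - y))
    & (forall x y, S x -> S y -> S (x * y))].

Definition is_subfield (S : F0 -> Prop) : Prop :=
  is_subring S /\ (forall x, S x -> x != 0 -> S x^-1).

Definition unit_of (S : F0 -> Prop) (u : F0) : Prop :=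
  [/\ S u, u != 0 & S u^-1].

Definition is_fraction_field_of (S : F0 -> Prop) : Prop :=
  forall x : F0, exists a b, [/\ S a, S b, b != 0 & x = a / b].

Definition is_DVR_unif (S : F0 -> Prop) (t : F0) : Prop :=
  [/\ is_subring S, S t, t != 0, ~ S t^-1
    & forall x, S x -> x != 0 -> exists (k : nat) u, unit_of S u /\ x = t ^+ k * u].

Definition is_submodule (T M : F0 -> Prop) : Prop :=
  [/\ M 0, (forall x y, M x -> M y -> M (x + y))
    & (forall a x, T a -> M x -> M (a * x))].

Definition in_tpow (t : F0) (m : nat) (M : F0 -> Prop) (x : F0) : Prop :=
  exists y, M y /\ x = t ^+ m * y.

(* t-adic completeness: the canonical map M -> lim_m M / t^(m+1) M is an
   isomorphism.  Unfolded: injectivity (kernel = intersection of the t^(m+1) M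
   is zero) and surjectivity (every compatible system of residues, given by
   representatives x_m with x_(m+1) - x_m in t^(m+1) M, comes from some x). *)
Definition tadic_complete (t : F0) (M : F0 -> Prop) : Prop :=
  (forall x, M x -> (forall m, in_tpow t m.+1 M x) -> x = 0) /\
  (forall xs : nat -> F0, (forall m, M (xs m)) ->
     (forall m, in_tpow t m.+1 M (xs m.+1 - xs m)) ->
     exists x, M x /\ forall m, in_tpow t m.+1 M (x - xs m)).

Variable abs : F0 -> R.

Definition vnorm (m : nat) (x : 'I_m -> F0) : R :=
  \big[Num.max/0]_(i < m) abs (x i).

Definition vsub (m : nat) (x y : 'I_m -> F0) : 'I_m -> F0 := fun i => x i - y i.

Definition vzero (m : nat) : 'I_m -> F0 := fun _ => 0.

Definition open_set (m : nat) (D : ('I_m -> F0) -> Prop) : Prop :=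
  forall p, D p -> exists r : R, 0 < r /\ forall q, vnorm (vsub q p) < r -> D q.

Definition ps_partial (m : nat) (c : ('I_m -> nat) -> F0) (x : 'I_m -> F0)
  (N : nat) : F0 :=
  \sum_(k : {ffun 'I_m -> 'I_N.+1} | (\sum_(i < m) (k i : nat) <= N)%N)
     c (fun i => (k i : nat)) * \prod_(i < m) x i ^+ k i.

Definition analytic_on (m : nat) (D : ('I_m -> F0) -> Prop)
  (g : ('I_m -> F0) -> F0) : Prop :=
  forall p, D p -> exists (r : R) (c : ('I_m -> nat) -> F0),
    [/\ 0 < r,
        (forall q, vnorm (vsub q p) < r -> D q),
        (forall eps : R, 0 < eps -> exists N : nat, forall k : 'I_m -> nat,
            (N <= \sum_(i < m) k i)%N -> abs (c k) * r ^+ (\sum_(i < m) k i) < eps)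
      & (forall q, vnorm (vsub q p) < r ->
           forall eps : R, 0 < eps -> exists N : nat, forall M : nat, (N <= M)%N ->
             abs (ps_partial c (vsub q p) M - g q) < eps)].

(* identification F0^n x F0^n = F0^(n+n) (max norm on the product) *)
Definition lpart (n : nat) (z : 'I_(n + n) -> F0) : 'I_n -> F0 :=
  fun i => z (lshift n i).
Definition rpart (n : nat) (z : 'I_(n + n) -> F0) : 'I_n -> F0 :=
  fun i => z (rshift n i).

Definition open_pairs (n : nat) (Om : ('I_n -> F0) -> ('I_n -> F0) -> Prop) : Prop :=
  open_set (fun z : 'I_(n + n) -> F0 => Om (lpart z) (rpart z)).

Definition analytic_pairs (n : nat) (Om : ('I_n -> F0) -> ('I_n -> F0) -> Prop)
  (f : ('I_n -> F0) -> ('I_n -> F0) -> ('I_n -> F0)) : Prop :=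
  forall i : 'I_n, analytic_on (fun z : 'I_(n + n) -> F0 => Om (lpart z) (rpart z))
                               (fun z => f (lpart z) (rpart z) i).

End Defs.

Arguments vzero {F0} m.

(* Main.v *)
Require Import Defs.
From HB Require Import structures.
From mathcomp Require Import all_boot all_order all_algebra.
From mathcomp Require Import reals ring lra zify.
From Stdlib Require Import FunctionalExtensionality IndefiniteDescription Classical.
Import Order.TTheory GRing.Theory Num.Theory.
Local Open Scope ring_scope.
Set Implicit Arguments. Unset Strict Implicit. Unset Printing Implicit Defensive.

Lemma RA (R : realType) (X c d s r C : R) (K : nat) :
  0 <= X -> 0 <= c -> 0 <= d -> 0 < s -> s <= r -> 2 * C * s <= r ^+ 2 ->
  c * r ^+ K <= C -> X * s <= d * s ^+ K -> (2 <= K)%N -> c * X <= d / 2.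
Proof.
move=> hX hc hd hs hsr hC hcr hXs; case: K hcr hXs => [|[|K]] // hcr hXs _.
have r0 : 0 < r by apply: lt_le_trans hsr.
have hu : 0 <= s ^+ K by apply: exprn_ge0; apply: ltW.
have huw : s ^+ K <= r ^+ K by apply: lerXn2r => //; rewrite ?nnegrE; apply: ltW.
have hw : 0 <= r ^+ K by apply: exprn_ge0; apply: ltW.
move: hcr hXs; rewrite !exprSr => hcr hXs.
set u := s ^+ K in hu huw hXs *; set w := r ^+ K in hw huw hcr *.
have h1 : X <= d * u * s.
  by rewrite -(ler_pM2r hs) -!mulrA; apply: le_trans hXs _; rewrite !mulrA lexx.
have h2 : c * X <= c * (d * w * s).
  apply: ler_wpM2l => //; apply: le_trans h1 _.
  by apply: ler_wpM2r; [apply: ltW| apply: ler_wpM2l].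
have h3 : c * w * r * r * (d * s) <= C * (d * s).
  apply: ler_wpM2r; first by apply: mulr_ge0 => //; apply: ltW.
  by move: hcr; rewrite !mulrA.
have h4 : C * s * d <= r * r / 2 * d.
  apply: ler_wpM2r => //. move: hC; rewrite expr2. lra.
have r2 : 0 < r * r by apply: mulr_gt0.
have h5 : c * X * (r * r) <= d / 2 * (r * r).
  apply: le_trans (ler_wpM2r (ltW r2) h2) _.
  have -> : c * (d * w * s) * (r * r) = c * w * r * r * (d * s) by ring.
  apply: le_trans h3 _.
  have -> : C * (d * s) = C * s * d by ring.
  apply: le_trans h4 _.
  have -> : r * r / 2 * d = d / 2 * (r * r) by ring.
  exact: lexx.
by rewrite ler_pM2r in h5.
Qed.

Lemma fchoice (I X : Type) (P : I -> X -> Prop) :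
  (forall i, exists x, P i x) -> exists h, forall i, P i (h i).
Proof.
move=> H; exists (fun i => proj1_sig (constructive_indefinite_description _ (H i))).
by move=> i; case: (constructive_indefinite_description _ (H i)).
Qed.

Lemma sr_X (F0 : fieldType) (S : F0 -> Prop) x n : is_subring S -> S x -> S (x ^+ n).
Proof.
case=> h0 h1 hB hM hx; elim: n => [|n IH]; first by rewrite expr0.
by rewrite exprS; apply: hM.
Qed.

Lemma tpow_weaken (F0 : fieldType) (T M : F0 -> Prop) (t : F0) k l x :
  is_subring T -> T t -> is_submodule T M -> (l <= k)%N -> in_tpow t k M x -> in_tpow t l M x.
Proof.
move=> hT ht [_ _ hMM] hlk [y [hy ->]].
exists (t ^+ (k - l) * y); split; first by apply: hMM => //; apply: sr_X.
by rewrite mulrA -exprD subnKC.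
Qed.


Section AbsTheory.
Variables (R : realType) (F0 : fieldType) (R0 : F0 -> Prop) (t : F0) (alpha : R) (abs : F0 -> R).
Hypothesis halpha : 1 < alpha.

Lemma alpha_gt0 : 0 < alpha. Proof. by apply: lt_trans halpha. Qed.

Lemma alpha_lt (a b : int) : (a < b)%R -> alpha ^ a < alpha ^ b.
Proof.
move=> hab.
have e : b = a + (b - a) by ring.
rewrite e expfzDr ?gt_eqF ?alpha_gt0 //.
have h1 : alpha ^ 1 <= alpha ^ (b - a).
  by apply: ler_weXz2l; [have := halpha; lra| lia].
have hp : 0 < alpha ^ a by apply: exprz_gt0; apply: alpha_gt0.
rewrite expr1z in h1.
rewrite -[X in X < _]mulr1 ltr_pM2l //; have := halpha; lra.
Qed.

Lemma alpha_mono (a b : int) : alpha ^ a <= alpha ^ b -> (a <= b)%R.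
Proof.
move=> h; rewrite leNgt; apply/negP => hba.
by have := alpha_lt hba; rewrite ltNge h.
Qed.
Hypothesis hR0 : is_DVR_unif R0 t.
Hypothesis hF0 : is_fraction_field_of R0.
Hypothesis habs0 : abs 0 = 0.
Hypothesis habs : forall (k : int) (u : F0), unit_of R0 u -> abs (t ^ k * u) = alpha ^ (- k).

Lemma t_neq0 : t != 0. Proof. by case: hR0. Qed.
Lemma R0sub : is_subring R0. Proof. by case: hR0. Qed.
Lemma R0_0 : R0 0. Proof. by case: R0sub. Qed.
Lemma R0_1 : R0 1. Proof. by case: R0sub. Qed.
Lemma R0_B x y : R0 x -> R0 y -> R0 (x - y). Proof. by case: R0sub => _ _ H _; apply: H. Qed.
Lemma R0_M x y : R0 x -> R0 y -> R0 (x * y). Proof. by case: R0sub => _ _ _ H; apply: H. Qed.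
Lemma R0_N x : R0 x -> R0 (- x). Proof. by move=> h; rewrite -sub0r; apply: R0_B => //; apply: R0_0. Qed.
Lemma R0_D x y : R0 x -> R0 y -> R0 (x + y).
Proof. by move=> hx hy; rewrite -(opprK y); apply: R0_B => //; apply: R0_N. Qed.
Lemma R0_t : R0 t. Proof. by case: hR0. Qed.
Lemma R0_X x n : R0 x -> R0 (x ^+ n).
Proof. by move=> hx; elim: n => [|n IH]; [rewrite expr0; apply: R0_1 | rewrite exprS; apply: R0_M]. Qed.

Lemma R0_form x : R0 x -> x != 0 -> exists (k : nat) u, unit_of R0 u /\ x = t ^+ k * u.
Proof. by case: hR0 => _ _ _ _; apply. Qed.

Lemma val_form x : x != 0 -> exists (k : int) u, unit_of R0 u /\ x = t ^ k * u.
Proof.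
move=> x0; have [a [b [ha hb b0 ex]]] := hF0 x; rewrite ex in x0 *.
have a0 : a != 0 by apply: contraNneq x0 => ->; rewrite mul0r.
have [i [u1 [[hu1 u10 hu1i] ->]]] := R0_form ha a0.
have [j [u2 [[hu2 u20 hu2i] ->]]] := R0_form hb b0.
exists (i%:Z - j%:Z), (u1 / u2); split.
  split; first by apply: R0_M.
  - by rewrite mulf_neq0 ?invr_neq0.
  - by rewrite invfM invrK mulrC; apply: R0_M.
rewrite expfzDr ?t_neq0 // -exprnN invfM -exprnP; ring.
Qed.

Lemma abs_val x : x != 0 -> exists k : int, abs x = alpha ^ (- k).
Proof. by move=> /val_form [k [u [hu ->]]]; exists k; apply: habs. Qed.

Lemma abs_ge0 x : 0 <= abs x.
Proof.
have [->|x0] := eqVneq x 0; first by rewrite habs0.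
have [k ->] := abs_val x0; apply: exprz_ge0; apply: ltW; apply: alpha_gt0.
Qed.

Lemma abs_gt0 x : x != 0 -> 0 < abs x.
Proof. move=> x0; have [k ->] := abs_val x0; apply: exprz_gt0; apply: alpha_gt0. Qed.

Lemma int_nat (d : int) : (0 <= d)%R -> exists n : nat, d = n%:Z.
Proof. by case: d => // n _; exists n. Qed.

Lemma absP (k : int) x : abs x <= alpha ^ (- k) <-> exists y, R0 y /\ x = t ^ k * y.
Proof.
split.
  have [->|x0] := eqVneq x 0; first by move=> _; exists 0; split; [apply: R0_0| rewrite mulr0].
  have [l [u [hu ->]]] := val_form x0; rewrite habs // => h.
  have := alpha_mono h => hkl.
  have [n hn] : exists n : nat, l - k = n%:Z by apply: int_nat; lia.
  exists (t ^+ n * u); split; first by apply: R0_M; [apply: R0_X; apply: R0_t| case: hu].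
  rewrite mulrA exprnP -hn -expfzDr ?t_neq0 //; congr (_ * _); congr (_ ^ _); ring.
move=> [y [hy ->]].
have [->|y0] := eqVneq y 0.
  by rewrite mulr0 habs0; apply: exprz_ge0; apply: ltW; apply: alpha_gt0.
have [j [u [hu ->]]] := R0_form hy y0.
rewrite mulrA exprnP -expfzDr ?t_neq0 // habs //.
apply: ler_weXz2l; first by have := halpha; lra.
lia.
Qed.

Lemma abs_discr (k : int) x : abs x < alpha ^ (- k) -> abs x <= alpha ^ (- (k + 1)).
Proof.
have [->|x0] := eqVneq x 0.
  by rewrite habs0 => _; apply: exprz_ge0; apply: ltW; apply: alpha_gt0.
have [l [u [hu ->]]] := val_form x0; rewrite habs // => h.
have hkl : (k < l)%R.
  rewrite ltNge; apply/negP => hlk; move: h; rewrite ltNge => /negP; apply.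
  apply: ler_weXz2l; first by have := halpha; lra.
  lia.
apply: ler_weXz2l; first by have := halpha; lra.
lia.
Qed.

Lemma unit_m1 : unit_of R0 (-1).
Proof.
split; first by apply: R0_N; apply: R0_1.
- by rewrite oppr_eq0 oner_eq0.
- by rewrite invrN1; apply: R0_N; apply: R0_1.
Qed.

Lemma unit_1 : unit_of R0 1.
Proof. by split; [apply: R0_1| apply: oner_neq0| rewrite invr1; apply: R0_1]. Qed.

Lemma abs1 : abs 1 = 1.
Proof. by have := habs 0 unit_1; rewrite expr0z mul1r oppr0 expr0z. Qed.

Lemma abs_m1 : abs (-1) = 1.
Proof. by have := habs 0 unit_m1; rewrite expr0z mul1r oppr0 expr0z. Qed.

Lemma absM x y : abs (x * y) = abs x * abs y.
Proof.
have [->|x0] := eqVneq x 0; first by rewrite mul0r habs0 mul0r.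
have [->|y0] := eqVneq y 0; first by rewrite mulr0 habs0 mulr0.
have [k [u [[hu u0 hui] ->]]] := val_form x0.
have [l [v [[hv v0 hvi] ->]]] := val_form y0.
have huv : unit_of R0 (u * v).
  split; first by apply: R0_M.
  - by rewrite mulf_neq0.
  - by rewrite invfM; apply: R0_M.
have -> : t ^ k * u * (t ^ l * v) = t ^ (k + l) * (u * v).
  by rewrite expfzDr ?t_neq0 //; ring.
rewrite (habs _ huv) (habs _ (And3 hu u0 hui)) (habs _ (And3 hv v0 hvi)).
by rewrite opprD expfzDr // gt_eqF // alpha_gt0.
Qed.

Lemma absN x : abs (- x) = abs x.
Proof. by rewrite -mulN1r absM abs_m1 mul1r. Qed.

Lemma absD x y : abs (x + y) <= Num.max (abs x) (abs y).
Proof.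
wlog hxy : x y / abs x <= abs y.
  move=> H; have [h|h] := boolP (abs x <= abs y); first by apply: H.
  rewrite addrC maxC; apply: H; rewrite -ltNge in h; exact: ltW.
have [y0|y0] := eqVneq y 0.
  have x0 : x = 0.
    apply/eqP; apply: contraT => x0; have := abs_gt0 x0; move: hxy; rewrite y0 habs0; lra.
  by rewrite x0 y0 addr0 habs0 le_max lexx.
have [l hl] := abs_val y0.
have [x' [hx' ->]] : exists y, R0 y /\ x = t ^ l * y by apply/absP; rewrite -hl.
have [y' [hy' ey]] : exists z, R0 z /\ y = t ^ l * z by apply/absP; rewrite -hl.
rewrite ey -mulrDr -ey le_max; apply/orP; right.
by rewrite hl; apply/absP; exists (x' + y'); split => //; apply: R0_D.
Qed.

Lemma absB x y : abs (x - y) <= Num.max (abs x) (abs y).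
Proof. by rewrite -(absN y); apply: absD. Qed.


Lemma absD_lt x y B : abs x < B -> abs y < B -> abs (x + y) < B.
Proof. by move=> hx hy; apply: le_lt_trans (absD x y) _; rewrite gt_max hx hy. Qed.
Lemma absB_lt x y B : abs x < B -> abs y < B -> abs (x - y) < B.
Proof. by move=> hx hy; apply: absD_lt => //; rewrite absN. Qed.
Lemma absD_le x y B : abs x <= B -> abs y <= B -> abs (x + y) <= B.
Proof. by move=> hx hy; apply: le_trans (absD x y) _; rewrite ge_max hx hy. Qed.
Lemma absB_le x y B : abs x <= B -> abs y <= B -> abs (x - y) <= B.
Proof. by move=> hx hy; apply: absD_le => //; rewrite absN. Qed.

Lemma abs_sum (I : Type) (r : seq I) (P : pred I) (F : I -> F0) B :
  0 <= B -> (forall i, P i -> abs (F i) <= B) -> abs (\sum_(i <- r | P i) F i) <= B.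
Proof.
move=> hB hF; elim/big_ind: _ => //; first by rewrite habs0.
by move=> a b ha hb; apply: absD_le.
Qed.

Lemma comb (A A' B B' : F0) (s d : R) (p q : nat) : 0 <= s -> 0 <= d ->
  abs A <= s ^+ p -> abs A' <= s ^+ p -> abs (A - A') * s <= d * s ^+ p ->
  abs B <= s ^+ q -> abs B' <= s ^+ q -> abs (B - B') * s <= d * s ^+ q ->
  [/\ abs (A * B) <= s ^+ (p + q), abs (A' * B') <= s ^+ (p + q)
    & abs (A * B - A' * B') * s <= d * s ^+ (p + q)].
Proof.
move=> hs hd hA hA' hAA hB hB' hBB.
have g := abs_ge0.
split.
- by rewrite absM exprD; apply: ler_pM.
- by rewrite absM exprD; apply: ler_pM.
have -> : A * B - A' * B' = A * (B - B') + (A - A') * B' by ring.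
have h := absD (A * (B - B')) ((A - A') * B').
apply: le_trans (ler_wpM2r hs h) _.
rewrite !absM.
have h1 : abs A * abs (B - B') * s <= d * s ^+ (p + q).
  have -> : d * s ^+ (p + q) = s ^+ p * (d * s ^+ q) by rewrite exprD; ring.
  by rewrite -mulrA; apply: ler_pM => //; apply: mulr_ge0.
have h2 : abs (A - A') * abs B' * s <= d * s ^+ (p + q).
  have -> : d * s ^+ (p + q) = (d * s ^+ p) * s ^+ q by rewrite exprD; ring.
  by rewrite mulrAC; apply: ler_pM => //; apply: mulr_ge0.
by have [hxy|hxy] := leP (abs A * abs (B - B')) (abs (A - A') * abs B').
Qed.

Lemma pow_bd (a a' : F0) (s d : R) (k : nat) : 0 <= s -> 0 <= d ->
  abs a <= s -> abs a' <= s -> abs (a - a') <= d ->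
  [/\ abs (a ^+ k) <= s ^+ k, abs (a' ^+ k) <= s ^+ k
    & abs (a ^+ k - a' ^+ k) * s <= d * s ^+ k].
Proof.
move=> hs hd ha ha' haa; elim: k => [|k [IH1 IH2 IH3]].
  by rewrite !expr0 abs1 subrr habs0 mul0r mulr1.
have [] := @comb a a' (a ^+ k) (a' ^+ k) s d 1 k hs hd; rewrite ?expr1 //.
  by apply: ler_wpM2r.
by rewrite add1n -!exprS.
Qed.

Lemma mon_seq (I : Type) (r : seq I) (e : I -> nat) (x x' : I -> F0) (s d : R) :
  0 <= s -> 0 <= d -> (forall i, abs (x i) <= s) -> (forall i, abs (x' i) <= s) ->
  (forall i, abs (x i - x' i) <= d) ->
  [/\ abs (\prod_(i <- r) x i ^+ e i) <= s ^+ (\sum_(i <- r) e i),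
      abs (\prod_(i <- r) x' i ^+ e i) <= s ^+ (\sum_(i <- r) e i)
    & abs (\prod_(i <- r) x i ^+ e i - \prod_(i <- r) x' i ^+ e i) * s
        <= d * s ^+ (\sum_(i <- r) e i)].
Proof.
move=> hs hd hx hx' hxx; elim: r => [|i r [IH1 IH2 IH3]].
  by rewrite !big_nil abs1 subrr habs0 mul0r mulr1.
rewrite !big_cons.
have [P1 P2 P3] := pow_bd (e i) hs hd (hx i) (hx' i) (hxx i).
by apply: comb.
Qed.



Lemma fin_ub (I : eqType) (s : seq I) (F : I -> R) : exists C, forall i, i \in s -> F i <= C.
Proof.
elim: s => [|a s [C HC]]; first by exists 0.
exists (Num.max (F a) C) => i; rewrite in_cons => /orP [/eqP ->|hi].
  by rewrite le_max lexx.
by rewrite le_max HC ?orbT.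
Qed.

Lemma coef_bound m (c : ('I_m -> nat) -> F0) (r : R) :
  (forall eps : R, 0 < eps -> exists N : nat, forall k : 'I_m -> nat,
     (N <= \sum_(i < m) k i)%N -> abs (c k) * r ^+ (\sum_(i < m) k i) < eps) ->
  exists C : R, 0 < C /\ forall k : 'I_m -> nat, abs (c k) * r ^+ (\sum_(i < m) k i) <= C.
Proof.
move=> hc; have [N0 H0] := hc 1 ltr01.
have [C0 HC0] := fin_ub (enum {ffun 'I_m -> 'I_N0})
  (fun kk => abs (c (fun i => kk i : nat)) * r ^+ (\sum_(i < m) kk i)).
exists (Num.max 1 C0); split; first by rewrite lt_max ltr01.
move=> k; have [hN|hN] := leqP N0 (\sum_(i < m) k i).
  by rewrite le_max ltW ?H0.
have hk : forall i, (k i < N0)%N.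
  move=> i; apply: leq_ltn_trans hN; by rewrite (bigD1 i) //= leq_addr.
pose kk : {ffun 'I_m -> 'I_N0} := [ffun i => Ordinal (hk i)].
have ek : (fun i => kk i : nat) = k by apply: functional_extensionality => i; rewrite ffunE.
have es : (\sum_(i < m) kk i = \sum_(i < m) k i)%N by apply: eq_bigr => i _; rewrite ffunE.
have := HC0 kk; rewrite mem_enum => /(_ isT); rewrite ek es => h.
by rewrite le_max h orbT.
Qed.

Definition vpair n (x y : 'I_n -> F0) : 'I_(n + n) -> F0 :=
  fun j => match split j with inl a => x a | inr b => y b end.

Lemma vpair_l n (x y : 'I_n -> F0) i : vpair x y (lshift n i) = x i.
Proof. by rewrite /vpair; have /= -> := @unsplitK n n (inl _ i). Qed.
Lemma vpair_r n (x y : 'I_n -> F0) i : vpair x y (rshift n i) = y i.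
Proof. by rewrite /vpair; have /= -> := @unsplitK n n (inr _ i). Qed.
Lemma lpart_vpair n (x y : 'I_n -> F0) : lpart (vpair x y) = x.
Proof. by apply: functional_extensionality => i; rewrite /lpart vpair_l. Qed.
Lemma rpart_vpair n (x y : 'I_n -> F0) : rpart (vpair x y) = y.
Proof. by apply: functional_extensionality => i; rewrite /rpart vpair_r. Qed.

Lemma vpair_abs n (x y : 'I_n -> F0) (P : R -> Prop) :
  (forall i, P (abs (x i))) -> (forall i, P (abs (y i))) -> forall j, P (abs (vpair x y j)).
Proof. by move=> hx hy j; rewrite /vpair; case: split. Qed.

Lemma mon_split n (x y : 'I_n -> F0) (k : 'I_(n + n) -> nat) :
  \prod_(j < n + n) vpair x y j ^+ k j =
  (\prod_(i < n) x i ^+ k (lshift n i)) * (\prod_(i < n) y i ^+ k (rshift n i)).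
Proof.
rewrite big_split_ord /=; congr (_ * _); apply: eq_bigr => i _.
  by rewrite vpair_l.
by rewrite vpair_r.
Qed.

Lemma sum_split n (k : 'I_(n + n) -> nat) :
  (\sum_(j < n + n) k j = \sum_(i < n) k (lshift n i) + \sum_(i < n) k (rshift n i))%N.
Proof. by rewrite big_split_ord. Qed.

Lemma mon_case n (e : 'I_n -> nat) :
  (forall x : 'I_n -> F0, \prod_(i < n) x i ^+ e i = 1) \/
  (\prod_(i < n) (@vzero F0 n i) ^+ e i = 0 /\ (0 < \sum_(i < n) e i)%N).
Proof.
have [H|H] := boolP [forall i, e i == 0%N].
  left => x; apply: big1 => i _; by rewrite (eqP (forallP H i)) expr0.
right; move/forallPn: H => [i hi]; split.
  by rewrite (bigD1 i) //= /vzero expr0n (negbTE hi) mul0r.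
by rewrite (bigD1 i) //= ltn_addr // lt0n.
Qed.

Definition mon m (k : 'I_m -> nat) (z : 'I_m -> F0) := \prod_(j < m) z j ^+ k j.

Lemma term_bd n (k : 'I_(n + n) -> nat) (ck : F0) (x y x' y' : 'I_n -> F0) (s d r C : R) :
  0 < s -> s <= r -> 2 * C * s <= r ^+ 2 -> 0 <= d ->
  abs ck * r ^+ (\sum_(j < n + n) k j) <= C ->
  (forall i, abs (x i) <= s) -> (forall i, abs (y i) <= s) ->
  (forall i, abs (x' i) <= s) -> (forall i, abs (y' i) <= s) ->
  (forall i, abs (x i - x' i) <= d) -> (forall i, abs (y i - y' i) <= d) ->
  abs (ck * (mon k (vpair x y) - mon k (vpair x (vzero n)) - mon k (vpair (vzero n) y)
        - (mon k (vpair x' y') - mon k (vpair x' (vzero n)) - mon k (vpair (vzero n) y'))))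
    <= d / 2.
Proof.
move=> hs hsr hC hd hck hx hy hx' hy' hxx hyy.
have hd2 : 0 <= d / 2 by rewrite divr_ge0 // ler0n.
rewrite /mon !mon_split.
pose eL := fun i => k (lshift n i); pose eR := fun i => k (rshift n i).
rewrite -/(eL _) -/(eR _).
have [HL|[HL0 HLp]] := mon_case eL.
  rewrite !HL.
  have -> : forall a b c : F0, 1 * a - 1 * b - 1 * a - (1 * c - 1 * b - 1 * c) = 0.
    by move=> *; ring.
  by rewrite mulr0 habs0.
have [HR|[HR0 HRp]] := mon_case eR.
  rewrite !HR.
  have -> : forall a b c : F0, a * 1 - a * 1 - b * 1 - (c * 1 - c * 1 - b * 1) = 0.
    by move=> *; ring.
  by rewrite mulr0 habs0.
rewrite HL0 HR0 !mulr0 !mul0r !subr0.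
have hs0 : 0 <= s by apply: ltW.
have [A1 A2 A3] := mon_seq (index_enum 'I_n) eL hs0 hd hx hx' hxx.
have [B1 B2 B3] := mon_seq (index_enum 'I_n) eR hs0 hd hy hy' hyy.
have [_ _ H] := comb hs0 hd A1 A2 A3 B1 B2 B3.
rewrite absM.
apply: (RA (abs_ge0 _) (abs_ge0 _) hd hs hsr hC _ H).
  by rewrite sum_split in hck.
by rewrite -(addn1 1%N); apply: leq_add.
Qed.

Lemma analytic_est n (c : ('I_(n + n) -> nat) -> F0) (r : R) (g : ('I_(n + n) -> F0) -> F0) :
  0 < r ->
  (forall eps : R, 0 < eps -> exists N : nat, forall k : 'I_(n + n) -> nat,
     (N <= \sum_(i < n + n) k i)%N -> abs (c k) * r ^+ (\sum_(i < n + n) k i) < eps) ->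
  (forall q, (forall j, abs (q j) < r) -> forall eps : R, 0 < eps ->
     exists N : nat, forall M : nat, (N <= M)%N -> abs (ps_partial c q M - g q) < eps) ->
  exists rho : R, 0 < rho /\ forall x y x' y' : 'I_n -> F0,
    (forall i, abs (x i) < rho) -> (forall i, abs (y i) < rho) ->
    (forall i, abs (x' i) < rho) -> (forall i, abs (y' i) < rho) ->
    forall d : R, 0 <= d -> (forall i, abs (x i - x' i) <= d) -> (forall i, abs (y i - y' i) <= d) ->
    abs (g (vpair x y) - g (vpair x (vzero n)) - g (vpair (vzero n) y)
        - (g (vpair x' y') - g (vpair x' (vzero n)) - g (vpair (vzero n) y'))) <= d / 2.
Proof.
move=> hr hcoef hconv.
have [C [C0 hC]] := coef_bound hcoef.
have C20 : 0 < 2 * C by apply: mulr_gt0.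
have r2 : 0 < r ^+ 2 / (2 * C) by apply: divr_gt0 => //; apply: exprn_gt0.
exists (Num.min r (r ^+ 2 / (2 * C))); split; first by rewrite lt_min hr r2.
set s := Num.min _ _.
move=> x y x' y' hx hy hx' hy' d hd hxx hyy.
have hs : 0 < s by rewrite lt_min hr r2.
have hsr : s <= r by rewrite ge_min lexx.
have hsC : 2 * C * s <= r ^+ 2.
  have : s <= r ^+ 2 / (2 * C) by rewrite ge_min lexx orbT.
  by rewrite ler_pdivlMr // mulrC.
have hd2 : 0 <= d / 2 by rewrite divr_ge0 // ler0n.
have hlt : forall (u : 'I_n -> F0), (forall i, abs (u i) < s) -> forall i, abs (u i) < r.
  by move=> u hu i; apply: lt_le_trans (hu i) hsr.
have h0 : forall i, abs (@vzero F0 n i) < r by move=> i; rewrite /vzero habs0.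
have P1 := hconv _ (vpair_abs (P := fun v => v < r) (hlt _ hx) (hlt _ hy)).
have P2 := hconv _ (vpair_abs (P := fun v => v < r) (hlt _ hx) h0).
have P3 := hconv _ (vpair_abs (P := fun v => v < r) h0 (hlt _ hy)).
have P4 := hconv _ (vpair_abs (P := fun v => v < r) (hlt _ hx') (hlt _ hy')).
have P5 := hconv _ (vpair_abs (P := fun v => v < r) (hlt _ hx') h0).
have P6 := hconv _ (vpair_abs (P := fun v => v < r) h0 (hlt _ hy')).
rewrite leNgt; apply/negP => hQ.
set Q := _ - _ in hQ.
have E0 : 0 < abs Q by apply: le_lt_trans hQ.
have [N1 H1] := P1 _ E0; have [N2 H2] := P2 _ E0; have [N3 H3] := P3 _ E0.
have [N4 H4] := P4 _ E0; have [N5 H5] := P5 _ E0; have [N6 H6] := P6 _ E0.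
pose M := maxn N1 (maxn N2 (maxn N3 (maxn N4 (maxn N5 N6)))).
have := H1 M; have := H2 M; have := H3 M; have := H4 M; have := H5 M; have := H6 M.
rewrite /M !leq_max !leqnn !orbT /= => /(_ isT) e6 /(_ isT) e5 /(_ isT) e4 /(_ isT) e3 /(_ isT) e2 /(_ isT) e1.
have hS : abs (ps_partial c (vpair x y) M - ps_partial c (vpair x (vzero n)) M
     - ps_partial c (vpair (vzero n) y) M
     - (ps_partial c (vpair x' y') M - ps_partial c (vpair x' (vzero n)) M
        - ps_partial c (vpair (vzero n) y') M)) <= d / 2.
  rewrite /ps_partial -!sumrB; apply: abs_sum => // kk _.
  rewrite -!mulrBr.
  apply: (term_bd (k := fun i => kk i) (C := C) hs hsr hsC hd) => //.
  - by move=> i; apply: ltW.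
  - by move=> i; apply: ltW.
  - by move=> i; apply: ltW.
  - by move=> i; apply: ltW.
have hS' := le_lt_trans hS hQ.
move: hS' e1 e2 e3 e4 e5 e6.
set S1 := ps_partial c _ M; set S2 := ps_partial c _ M; set S3 := ps_partial c _ M.
set S4 := ps_partial c _ M; set S5 := ps_partial c _ M; set S6 := ps_partial c _ M.
move=> hS' e1 e2 e3 e4 e5 e6.
have eQ : Q = (S1 - S2 - S3 - (S4 - S5 - S6)) - (S1 - g (vpair x y))
   + (S2 - g (vpair x (vzero n))) + (S3 - g (vpair (vzero n) y))
   + (S4 - g (vpair x' y')) - (S5 - g (vpair x' (vzero n))) - (S6 - g (vpair (vzero n) y')).
  by rewrite /Q; ring.
have : abs Q < abs Q.
  rewrite {1}eQ.
  apply: absB_lt => //; apply: absB_lt => //; apply: absD_lt => //.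
  apply: absD_lt => //; apply: absD_lt => //; apply: absB_lt => //.
by rewrite ltxx.
Qed.


Lemma Pm_abs (m : nat) x : in_tpow t m R0 x <-> abs x <= alpha ^ (- (m%:Z)).
Proof. by rewrite absP. Qed.

Lemma Pm_R0 m x : in_tpow t m R0 x -> R0 x.
Proof. by case=> y [hy ->]; apply: R0_M => //; apply: R0_X; apply: R0_t. Qed.

Lemma Pm_D m x y : in_tpow t m R0 x -> in_tpow t m R0 y -> in_tpow t m R0 (x + y).
Proof. by move=> [a [ha ->]] [b [hb ->]]; exists (a + b); split; [apply: R0_D| rewrite mulrDr]. Qed.

Lemma Pm_B m x y : in_tpow t m R0 x -> in_tpow t m R0 y -> in_tpow t m R0 (x - y).
Proof. by move=> [a [ha ->]] [b [hb ->]]; exists (a - b); split; [apply: R0_B| rewrite mulrBr]. Qed.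

Lemma vnorm_lt m (z : 'I_m -> F0) B : 0 < B -> (forall j, abs (z j) < B) -> vnorm abs z < B.
Proof. by move=> hB hz; rewrite /vnorm; elim/big_ind: _ => // a b ha hb; rewrite gt_max ha hb. Qed.

Lemma vnorm_ge m (z : 'I_m -> F0) i : abs (z i) <= vnorm abs z.
Proof. by rewrite /vnorm (bigD1 i) //= le_max lexx. Qed.

Lemma vsub0 m (q : 'I_m -> F0) : vsub q (vzero m) = q.
Proof. by apply: functional_extensionality => j; rewrite /vsub /vzero subr0. Qed.

Lemma alpha_small (rho : R) : 0 < rho -> exists N : nat, (1 <= N)%N /\ alpha ^ (- (N%:Z)) < rho.
Proof.
move=> hr.
have ha := halpha.
have bern : forall N : nat, 1 + N%:R * (alpha - 1) <= alpha ^+ N.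
  elim=> [|N IH]; first by rewrite mul0r addr0 expr0.
  rewrite exprS -natr1.
  have h : 0 <= N%:R * (alpha - 1) * (alpha - 1) :> R.
    by apply: mulr_ge0; [apply: mulr_ge0; [apply: ler0n| lra]| lra].
  have h2 : alpha * (1 + N%:R * (alpha - 1)) <= alpha * alpha ^+ N.
    by apply: ler_wpM2l => //; lra.
  nra.
have x0 : 0 <= (rho * (alpha - 1))^-1 by rewrite invr_ge0; apply: mulr_ge0; lra.
have hb := archi_boundP x0.
set K := Num.bound _ in hb.
exists K.+1; split => //.
rewrite -invr_expz -exprnP.
have hp : 0 < alpha ^+ K.+1 by apply: exprn_gt0; lra.
rewrite -div1r ltr_pdivrMr //.
have h1 := bern K.+1.
have h3 : 1 < rho * (K.+1%:R * (alpha - 1)).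
  have hra : 0 < rho * (alpha - 1) by apply: mulr_gt0; lra.
  have : (rho * (alpha - 1))^-1 < K.+1%:R.
    by apply: lt_trans hb _; rewrite ltr_nat.
  rewrite -div1r ltr_pdivrMr // => h.
  have e : rho * (K.+1%:R * (alpha - 1)) = K.+1%:R * (rho * (alpha - 1)) by ring.
  by rewrite e.
have : rho * (K.+1%:R * (alpha - 1)) <= rho * alpha ^+ K.+1.
  by apply: ler_wpM2l; [apply: ltW| lra].
lra.
Qed.

Lemma fin_lb (I : eqType) (s : seq I) (P : I -> R -> Prop) :
  (forall i, exists rho, 0 < rho /\ P i rho) ->
  (forall i rho rho', P i rho -> 0 < rho' -> rho' <= rho -> P i rho') ->
  exists rho, 0 < rho /\ forall i, i \in s -> P i rho.
Proof.
move=> H Hm; elim: s => [|a s [r [r0 Hr]]]; first by exists 1.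
have [ra [ra0 Ha]] := H a.
exists (Num.min ra r); split; first by rewrite lt_min ra0 r0.
move=> i; rewrite in_cons => /orP [/eqP ->|hi].
  by apply: (Hm _ ra); [exact: Ha| rewrite lt_min ra0 r0| rewrite ge_min lexx].
by apply: (Hm _ r); [apply: Hr| rewrite lt_min ra0 r0| rewrite ge_min lexx orbT].
Qed.

Lemma est_all n (Om : ('I_n -> F0) -> ('I_n -> F0) -> Prop)
  (f : ('I_n -> F0) -> ('I_n -> F0) -> ('I_n -> F0)) :
  Om (vzero n) (vzero n) -> analytic_pairs abs Om f ->
  exists rho : R, 0 < rho /\ forall i, forall x y x' y' : 'I_n -> F0,
    (forall i, abs (x i) < rho) -> (forall i, abs (y i) < rho) ->
    (forall i, abs (x' i) < rho) -> (forall i, abs (y' i) < rho) ->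
    forall d : R, 0 <= d -> (forall i, abs (x i - x' i) <= d) -> (forall i, abs (y i - y' i) <= d) ->
    abs (f x y i - f x (vzero n) i - f (vzero n) y i
        - (f x' y' i - f x' (vzero n) i - f (vzero n) y' i)) <= d / 2.
Proof.
move=> hOm0 hf.
pose P := (fun i rho => forall x y x' y' : 'I_n -> F0,
    (forall i, abs (x i) < rho) -> (forall i, abs (y i) < rho) ->
    (forall i, abs (x' i) < rho) -> (forall i, abs (y' i) < rho) ->
    forall d : R, 0 <= d -> (forall i, abs (x i - x' i) <= d) -> (forall i, abs (y i - y' i) <= d) ->
    abs (f x y i - f x (vzero n) i - f (vzero n) y i
        - (f x' y' i - f x' (vzero n) i - f (vzero n) y' i)) <= d / 2).
have Hex : forall i, exists rho, 0 < rho /\ P i rho.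
  move=> i.
  have [r [c [hr _ hcoef hconv]]] := hf i (vzero (n + n)) hOm0.
  have hconv' : forall q, (forall j, abs (q j) < r) -> forall eps : R, 0 < eps ->
     exists N : nat, forall M : nat, (N <= M)%N ->
       abs (ps_partial c q M - (fun z => f (lpart z) (rpart z) i) q) < eps.
    move=> q hq; have := hconv q; rewrite vsub0; apply; exact: vnorm_lt.
  have [rho [rho0 Hr]] := @analytic_est n c r (fun z => f (lpart z) (rpart z) i) hr hcoef hconv'.
  exists rho; split => // x y x' y' hx hy hx' hy' d hd hxx hyy.
  have := Hr x y x' y' hx hy hx' hy' d hd hxx hyy.
  by rewrite /= !lpart_vpair !rpart_vpair.
have Hm : forall i r r', P i r -> 0 < r' -> r' <= r -> P i r'.
  move=> i r r' Hi r'0 hr' x y x' y' hx hy hx' hy'; apply: Hi.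
  + by move=> j; apply: lt_le_trans (hx j) hr'.
  + by move=> j; apply: lt_le_trans (hy j) hr'.
  + by move=> j; apply: lt_le_trans (hx' j) hr'.
  + by move=> j; apply: lt_le_trans (hy' j) hr'.
have [rho [rho0 H]] := fin_lb (enum 'I_n) Hex Hm.
by exists rho; split => // i; apply: H; rewrite mem_enum.
Qed.

Lemma Pm_weaken k l x : (l <= k)%N -> in_tpow t k R0 x -> in_tpow t l R0 x.
Proof.
move=> hlk [y [hy ->]]; exists (t ^+ (k - l) * y); split.
  by apply: R0_M => //; apply: R0_X; apply: R0_t.
by rewrite mulrA -exprD subnKC.
Qed.

Lemma tpow_sub (M M' : F0 -> Prop) m x : (forall y, M y -> M' y) -> in_tpow t m M x -> in_tpow t m M' x.
Proof. by move=> h [y [hy ->]]; exists y; split => //; apply: h. Qed.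

Lemma main (T V W : F0 -> Prop) (hT : is_DVR_unif T t)
  (hR0c : tadic_complete t R0)
  (hVsub : forall x, V x -> R0 x) (hWsub : forall x, W x -> R0 x)
  (hVmod : is_submodule T V) (hWmod : is_submodule T W)
  (hVc : tadic_complete t V) (hWc : tadic_complete t W)
  (hVW : forall x, R0 x -> exists v w, [/\ V v, W w & x = v + w])
  (n : nat)
  (Om : ('I_n -> F0) -> ('I_n -> F0) -> Prop)
  (f : ('I_n -> F0) -> ('I_n -> F0) -> ('I_n -> F0))
  (hOm : open_pairs abs Om) (hOm0 : Om (vzero n) (vzero n))
  (hf : analytic_pairs abs Om f)
  (hf0 : forall i, f (vzero n) (vzero n) i = 0)
  (hfid : exists U : ('I_n -> F0) -> Prop,
     [/\ open_set abs U, U (vzero n) &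
         forall x, U x -> forall i, f x (vzero n) i = x i /\ f (vzero n) x i = x i]) :
  exists eps : R, 0 < eps /\
    forall a : 'I_n -> F0, vnorm abs a <= eps ->
      exists v w : 'I_n -> F0,
        [/\ forall i, V (v i), forall i, W (w i), Om v w & forall i, f v w i = a i].
Proof.
have [U [hUo hU0 hUf]] := hfid.
have [rU [rU0 hrU]] := hUo _ hU0.
have [rO [rO0 hrO]] := hOm (vzero (n + n)) hOm0.
have [rL [rL0 hL]] := est_all hOm0 hf.
pose rho := Num.min rU (Num.min rO rL).
have rho0 : 0 < rho by rewrite !lt_min rU0 rO0 rL0.
have [N [N1 hN]] := alpha_small rho0.
pose B := alpha ^ (- (N%:Z)).
have B0 : 0 < B by apply: exprz_gt0; apply: alpha_gt0.
exists B; split => // a ha.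
have haN : forall i, in_tpow t N R0 (a i).
  by move=> i; apply/Pm_abs; apply: le_trans (vnorm_ge a i) ha.
have small : forall x, in_tpow t N R0 x -> [/\ abs x < rU, abs x < rO & abs x < rL].
  move=> x /Pm_abs hx; have := le_lt_trans hx hN.
  by rewrite !lt_min => /andP [-> /andP [-> ->]].
have inU : forall x : 'I_n -> F0, (forall i, in_tpow t N R0 (x i)) -> U x.
  move=> x hx; apply: hrU; rewrite vsub0; apply: vnorm_lt => // j.
  by case: (small _ (hx j)).
have key : forall x y x' y' : 'I_n -> F0,
    (forall i, in_tpow t N R0 (x i)) -> (forall i, in_tpow t N R0 (y i)) ->
    (forall i, in_tpow t N R0 (x' i)) -> (forall i, in_tpow t N R0 (y' i)) ->
    forall d : R, 0 <= d -> (forall i, abs (x i - x' i) <= d) -> (forall i, abs (y i - y' i) <= d) ->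
    forall i, abs (f x y i - x i - y i - (f x' y' i - x' i - y' i)) <= d / 2.
  move=> x y x' y' hx hy hx' hy' d hd hxx hyy i.
  have := hL i x y x' y' _ _ _ _ d hd hxx hyy.
  rewrite (hUf x (inU _ hx) i).1 (hUf y (inU _ hy) i).2.
  rewrite (hUf x' (inU _ hx') i).1 (hUf y' (inU _ hy') i).2; apply.
  - by move=> j; case: (small _ (hx j)).
  - by move=> j; case: (small _ (hy j)).
  - by move=> j; case: (small _ (hx' j)).
  - by move=> j; case: (small _ (hy' j)).
have [hTs hTt _ _ _] := hT.
have tT : forall k, T (t ^+ k) by move=> k; apply: sr_X.
have [hV0 hVD hVM] := hVmod.
have [hW0 hWD hWM] := hWmod.
pose S := (('I_n -> F0) * ('I_n -> F0))%type.
pose Inv j (s : S) := (forall i, [/\ V (s.1 i), W (s.2 i), in_tpow t N R0 (s.1 i)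
                                  & in_tpow t N R0 (s.2 i)])
                      /\ forall i, in_tpow t (N + j) R0 (a i - f s.1 s.2 i).
pose Rel j (s s' : S) := forall i, in_tpow t (N + j) V (s'.1 i - s.1 i)
                                /\ in_tpow t (N + j) W (s'.2 i - s.2 i).
have step : forall j s, Inv j s -> exists s', Inv j.+1 s' /\ Rel j s s'.
  move=> j [x' y'] [hI1 hI2] /=.
  have : forall i, exists pq : F0 * F0,
      [/\ V pq.1, W pq.2 & a i - f x' y' i = t ^+ (N + j) * (pq.1 + pq.2)].
    move=> i; have [b [hb eb]] := hI2 i; have [p [q [hp hq ebpq]]] := hVW b hb.
    by exists (p, q); split => //; rewrite eb ebpq.
  move=> /fchoice [pq hpq].
  pose p := fun i => (pq i).1; pose q := fun i => (pq i).2.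
  pose x := fun i => x' i + t ^+ (N + j) * p i.
  pose y := fun i => y' i + t ^+ (N + j) * q i.
  have hPp : forall i, in_tpow t N R0 (t ^+ (N + j) * p i).
    move=> i; exists (t ^+ j * p i); split; last by rewrite exprD mulrA.
    apply: R0_M; first by apply: R0_X; apply: R0_t.
    by apply: hVsub; case: (hpq i).
  have hPq : forall i, in_tpow t N R0 (t ^+ (N + j) * q i).
    move=> i; exists (t ^+ j * q i); split; last by rewrite exprD mulrA.
    apply: R0_M; first by apply: R0_X; apply: R0_t.
    by apply: hWsub; case: (hpq i).
  have hx : forall i, in_tpow t N R0 (x i).
    by move=> i; apply: Pm_D; [case: (hI1 i)| apply: hPp].
  have hy : forall i, in_tpow t N R0 (y i).
    by move=> i; apply: Pm_D; [case: (hI1 i)| apply: hPq].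
  have hx' : forall i, in_tpow t N R0 (x' i) by move=> i; case: (hI1 i).
  have hy' : forall i, in_tpow t N R0 (y' i) by move=> i; case: (hI1 i).
  pose d := alpha ^ (- ((N + j)%N%:Z)).
  have d0 : 0 <= d by apply: exprz_ge0; apply: ltW; apply: alpha_gt0.
  have hxx : forall i, abs (x i - x' i) <= d.
    move=> i; apply/Pm_abs; exists (p i); split; first by apply: hVsub; case: (hpq i).
    by rewrite /x (addrC (x' i)) addrK.
  have hyy : forall i, abs (y i - y' i) <= d.
    move=> i; apply/Pm_abs; exists (q i); split; first by apply: hWsub; case: (hpq i).
    by rewrite /y (addrC (y' i)) addrK.
  exists (x, y); split; last first.
    move=> i /=; split.
      exists (p i); split; first by case: (hpq i).
      by rewrite /x (addrC (x' i)) addrK.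
    exists (q i); split; first by case: (hpq i).
    by rewrite /y (addrC (y' i)) addrK.
  split => i /=.
    split => //.
    - by apply: hVD; [case: (hI1 i)| apply: hVM => //; case: (hpq i)].
    - by apply: hWD; [case: (hI1 i)| apply: hWM => //; case: (hpq i)].
  have hk := key x y x' y' hx hy hx' hy' d d0 hxx hyy i.
  have e : a i - f x y i = - (f x y i - x i - y i - (f x' y' i - x' i - y' i)).
    have [_ _ ea] := hpq i.
    have -> : a i = f x' y' i + t ^+ (N + j) * ((pq i).1 + (pq i).2).
      by rewrite -ea addrC subrK.
    rewrite /x /y /p /q; ring.
  apply/Pm_abs; rewrite e absN.
  have h2 : abs (f x y i - x i - y i - (f x' y' i - x' i - y' i)) < d.
    apply: le_lt_trans hk _.
    have dp : 0 < d by apply: exprz_gt0; apply: alpha_gt0.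
    lra.
  have := abs_discr h2.
  by have -> : ((N + j.+1)%N%:Z) = (N + j)%N%:Z + 1 by rewrite addnS -addn1 PoszD.
have step' : forall (js : nat * S), exists s', Inv js.1 js.2 -> Inv js.1.+1 s' /\ Rel js.1 js.2 s'.
  move=> [j s] /=; case: (classic (Inv j s)) => h.
    by have [s' hs'] := step j s h; exists s'.
  by exists s.
have [G hG] := fchoice step'.
pose s0 : S := (vzero n, vzero n).
have hs0 : Inv 0%N s0.
  split => i /=.
    split => //; by exists 0; split; [apply: R0_0| rewrite mulr0].
  by rewrite hf0 subr0 addn0.
pose sq := fix sq (k : nat) : S := match k with 0%N => s0 | k'.+1 => G (k', sq k') end.
have hsq : forall k, Inv k (sq k).
  by elim=> [|k IH] //=; apply: (hG (k, sq k) IH).1.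
have hrel : forall k, Rel k (sq k) (sq k.+1).
  by move=> k; apply: (hG (k, sq k) (hsq k)).2.
have hv : forall i, exists v, V v /\ forall m, in_tpow t m.+1 V (v - (sq m).1 i).
  move=> i; apply: hVc.2 => m; first by case: ((hsq m).1 i).
  apply: (tpow_weaken hTs hTt hVmod _ ((hrel m i).1)).
  by rewrite -addn1 addnC leq_add2r.
have hw : forall i, exists w, W w /\ forall m, in_tpow t m.+1 W (w - (sq m).2 i).
  move=> i; apply: hWc.2 => m; first by case: ((hsq m).1 i).
  apply: (tpow_weaken hTs hTt hWmod _ ((hrel m i).2)).
  by rewrite -addn1 addnC leq_add2r.
have [v hv'] := fchoice hv.
have [w hw'] := fchoice hw.
have eN : N.-1.+1 = N by rewrite prednK.
have hvN : forall i, in_tpow t N R0 (v i).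
  move=> i; rewrite -(subrK ((sq N.-1).1 i) (v i)); apply: Pm_D.
    by rewrite -eN; apply: tpow_sub hVsub _; apply: (hv' i).2.
  by case: ((hsq N.-1).1 i).
have hwN : forall i, in_tpow t N R0 (w i).
  move=> i; rewrite -(subrK ((sq N.-1).2 i) (w i)); apply: Pm_D.
    by rewrite -eN; apply: tpow_sub hWsub _; apply: (hw' i).2.
  by case: ((hsq N.-1).1 i).
exists v, w; split.
- by move=> i; case: (hv' i).
- by move=> i; case: (hw' i).
- have := hrO (vpair v w); rewrite lpart_vpair rpart_vpair; apply.
  rewrite vsub0; apply: vnorm_lt => //.
  apply: (vpair_abs (P := fun u => u < rO)) => i.
    by case: (small _ (hvN i)).
  by case: (small _ (hwN i)).
move=> i.
have hm : forall m, in_tpow t m.+1 R0 (a i - f v w i).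
  move=> m.
  pose d := alpha ^ (- (Posz m.+1)).
  have d0 : 0 <= d by apply: exprz_ge0; apply: ltW; apply: alpha_gt0.
  have [hI1 hI2] := hsq m.
  have hvv : forall j, abs (v j - (sq m).1 j) <= d.
    by move=> j; apply/Pm_abs; apply: tpow_sub hVsub _; apply: (hv' j).2.
  have hww : forall j, abs (w j - (sq m).2 j) <= d.
    by move=> j; apply/Pm_abs; apply: tpow_sub hWsub _; apply: (hw' j).2.
  have hk := key v w (sq m).1 (sq m).2 hvN hwN (fun j => match hI1 j with And4 _ _ h _ => h end)
     (fun j => match hI1 j with And4 _ _ _ h => h end) d d0 hvv hww i.
  have hai : abs (a i - f (sq m).1 (sq m).2 i) <= d.
    apply/Pm_abs; apply: (Pm_weaken _ (hI2 i)).
    by rewrite -addn1 addnC leq_add2r.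
  have hk' : abs (f v w i - v i - w i - (f (sq m).1 (sq m).2 i - (sq m).1 i - (sq m).2 i)) <= d.
    apply: le_trans hk _; lra.
  apply/Pm_abs.
  have -> : a i - f v w i = (a i - f (sq m).1 (sq m).2 i) - (v i - (sq m).1 i) - (w i - (sq m).2 i)
     - (f v w i - v i - w i - (f (sq m).1 (sq m).2 i - (sq m).1 i - (sq m).2 i)) by ring.
  by apply: absB_le => //; apply: absB_le => //; apply: absB_le.
apply/eqP; rewrite eq_sym -subr_eq0; apply/eqP.
apply: hR0c.1; last by apply: hm.
by apply: (Pm_R0 (hm 0%N)).
Qed.

End AbsTheory.

Unset Implicit Arguments.

Theorem corollary3p3 (R : realType) (F0 : fieldType)
  (T R0 F1 F2 V W : F0 -> Prop) (t : F0) (alpha : R) (abs : F0 -> R)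
  (* T: complete DVR with uniformizer t, contained in R0 *)
  (hT : is_DVR_unif T t) (hTc : tadic_complete t T) (hTR0 : forall x, T x -> R0 x)
  (* R0: complete DVR with uniformizer t and fraction field F0 *)
  (hR0 : is_DVR_unif R0 t) (hR0c : tadic_complete t R0)
  (hF0 : is_fraction_field_of R0)
  (* absolute value |t^k u| = alpha^(-k), alpha > 1 *)
  (halpha : 1 < alpha) (habs0 : abs 0 = 0)
  (habs : forall (k : int) (u : F0), unit_of R0 u -> abs (t ^ k * u) = alpha ^ (- k))
  (* F1, F2 subfields of F0 containing T *)
  (hF1 : is_subfield F1) (hF2 : is_subfield F2)
  (hTF1 : forall x, T x -> F1 x) (hTF2 : forall x, T x -> F2 x)
  (* V, W *)
  (hVsub : forall x, V x -> F1 x /\ R0 x) (hWsub : forall x, W x -> F2 x /\ R0 x)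
  (hVmod : is_submodule T V) (hWmod : is_submodule T W)
  (hVc : tadic_complete t V) (hWc : tadic_complete t W)
  (hVW : forall x, R0 x -> exists v w, [/\ V v, W w & x = v + w])
  (hVt : forall x, (V x /\ in_tpow t 1 R0 x) <-> in_tpow t 1 V x)
  (hWt : forall x, (W x /\ in_tpow t 1 R0 x) <-> in_tpow t 1 W x)
  (n : nat) (hn : (0 < n)%N)
  (Om : ('I_n -> F0) -> ('I_n -> F0) -> Prop)
  (f : ('I_n -> F0) -> ('I_n -> F0) -> ('I_n -> F0))
  (hOm : open_pairs abs Om) (hOm0 : Om (vzero n) (vzero n))
  (hf : analytic_pairs abs Om f)
  (hf0 : forall i, f (vzero n) (vzero n) i = 0)
  (hfid : exists U : ('I_n -> F0) -> Prop,
     [/\ open_set abs U, U (vzero n) &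
         forall x, U x -> forall i, f x (vzero n) i = x i /\ f (vzero n) x i = x i]) :
  exists eps : R, 0 < eps /\
    forall a : 'I_n -> F0, vnorm abs a <= eps ->
      exists v w : 'I_n -> F0,
        [/\ forall i, V (v i), forall i, W (w i), Om v w & forall i, f v w i = a i].
Proof.
have hVs : forall x, V x -> R0 x by move=> x /hVsub [].
have hWs : forall x, W x -> R0 x by move=> x /hWsub [].
exact: (@main R F0 R0 t alpha abs halpha hR0 hF0 habs0 habs T V W hT hR0c hVs hWs
          hVmod hWmod hVc hWc hVW n Om f hOm hOm0 hf hf0 hfid).
Qed.
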